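(* Let $A,B,C$ be non-zero integers and let $(x_0,y_0,z_0)$ be a non-trivial integer solution of $Ax^2+By^2+Cz^2=0$ with $z_0\neq0$. Define $$P_x(m,n)=x_0Am^2+2y_0Bmn-x_0Bn^2,\quad P_y(m,n)=-y_0Am^2+2x_0Amn+y_0Bn^2,\quad P_z(m,n)=z_0Am^2+z_0Bn^2.$$ Then every integer solution $(x,y,z)$ of $Ax^2+By^2+Cz^2=0$ can be written as $$(x,y,z)=\frac{p}{q}\big(P_x(m,n),P_y(m,n),P_z(m,n)\big)$$ with integers $m,n$ coprime, integers $p,q$ coprime, and $q>0$; moreover, in any such representation of an integer triple $(x,y,z)$ (with $\gcd(m,n)=\gcd(p,q)=1$, $q>0$), $q$ divides $2\,\mathrm{lcm}(A,B)\,C\,z_0^2$. *)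

(* Defs.v *)
From Stdlib Require Import ZArith.
Open Scope Z_scope.

Definition Px (A B x0 y0 z0 m n : Z) : Z := x0*A*m^2 + 2*y0*B*m*n - x0*B*n^2.
Definition Py (A B x0 y0 z0 m n : Z) : Z := -y0*A*m^2 + 2*x0*A*m*n + y0*B*n^2.
Definition Pz (A B x0 y0 z0 m n : Z) : Z := z0*A*m^2 + z0*B*n^2.

(* (x,y,z) = p/q (Px,Py,Pz)(m,n), written without division (q <> 0). *)
Definition represents (A B x0 y0 z0 x y z m n p q : Z) : Prop :=
  q * x = p * Px A B x0 y0 z0 m n /\
  q * y = p * Py A B x0 y0 z0 m n /\
  q * z = p * Pz A B x0 y0 z0 m n.

(* Main.v *)
Require Import Defs.
From Stdlib Require Import ZArith Znumtheory Lia.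
Open Scope Z_scope.
Lemma nondeg A B C x0 y0 z0 m n (hA : A <> 0) (hB : B <> 0) (hC : C <> 0) (hz0 : z0 <> 0)
  (hsol0 : A*x0^2 + B*y0^2 + C*z0^2 = 0) (hmn : Z.gcd m n = 1) :
  Px A B x0 y0 z0 m n = 0 -> Py A B x0 y0 z0 m n = 0 ->
  Pz A B x0 y0 z0 m n = 0 -> False.
Proof.
  intros H1 H2 H3.
  assert (I1 : Pz A B x0 y0 z0 m n = z0 * (A*m^2 + B*n^2)) by (unfold Pz; ring).
  assert (I2 : 2*(m*(A*x0*m + B*y0*n)) = Px A B x0 y0 z0 m n + x0*(A*m^2 + B*n^2)) by (unfold Px; ring).
  assert (I3 : 2*(n*(A*x0*m + B*y0*n)) = Py A B x0 y0 z0 m n + y0*(A*m^2 + B*n^2)) by (unfold Py; ring).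
  assert (I4 : 2*(B*(n*(y0*m - x0*n))) = Px A B x0 y0 z0 m n - x0*(A*m^2 + B*n^2)) by (unfold Px; ring).
  assert (I5 : 2*(A*(m*(y0*m - x0*n))) = - Py A B x0 y0 z0 m n + y0*(A*m^2 + B*n^2)) by (unfold Py; ring).
  assert (K1 : (A*x0^2+B*y0^2)*m = x0*(A*x0*m + B*y0*n) + B*y0*(y0*m - x0*n)) by ring.
  assert (K2 : (A*x0^2+B*y0^2)*n = y0*(A*x0*m + B*y0*n) - A*x0*(y0*m - x0*n)) by ring.
  remember (A*m^2 + B*n^2) as W eqn:HWd. clear HWd.
  remember (A*x0*m + B*y0*n) as L eqn:HLd. clear HLd.
  remember (y0*m - x0*n) as M eqn:HMd. clear HMd.
  rewrite H3 in I1. rewrite H1 in I2, I4. rewrite H2 in I3, I5.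
  assert (HW : W = 0) by (symmetry in I1; apply Z.mul_eq_0 in I1; lia).
  subst W.
  assert (E1 : m * L = 0) by (clear -I2; lia).
  assert (E2 : n * L = 0) by (clear -I3; lia).
  assert (E3 : B * (n * M) = 0) by (clear -I4; lia).
  assert (E4 : A * (m * M) = 0) by (clear -I5; lia).
  clear I1 I2 I3 I4 I5 H1 H2 H3.
  assert (Hmn0 : ~ (m = 0 /\ n = 0)).
  { intros [-> ->]. rewrite Z.gcd_0_l in hmn. lia. }
  assert (HL : L = 0).
  { destruct (Z.eq_dec m 0) as [Hm|Hm].
    - apply Z.mul_eq_0 in E2. destruct E2; [|auto]. exfalso; auto.
    - apply Z.mul_eq_0 in E1. destruct E1; [contradiction|auto]. }
  assert (HM : M = 0).
  { apply Z.mul_eq_0 in E3. apply Z.mul_eq_0 in E4.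
    destruct E3 as [E3|E3]; [contradiction|]. destruct E4 as [E4|E4]; [contradiction|].
    apply Z.mul_eq_0 in E3. apply Z.mul_eq_0 in E4.
    destruct E3 as [E3|E3]; [|auto]. destruct E4 as [E4|E4]; [|auto]. exfalso; auto. }
  subst L M.
  assert (Cz : C*z0^2 <> 0).
  { intro H. apply Z.mul_eq_0 in H. destruct H; [lia|]. apply (Z.pow_eq_0 z0 2) in H; lia. }
  replace (A*x0^2+B*y0^2) with (-(C*z0^2)) in K1, K2 by lia.
  rewrite !Z.mul_0_r, Z.add_0_r in K1. rewrite !Z.mul_0_r, Z.sub_0_r in K2.
  assert (Hm: C*z0^2*m = 0) by (clear -K1; lia).
  assert (Hn: C*z0^2*n = 0) by (clear -K2; lia).
  apply Z.mul_eq_0 in Hm; apply Z.mul_eq_0 in Hn.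
  destruct Hm; [contradiction|]; destruct Hn; [contradiction|]. apply Hmn0; auto.
Qed.

Lemma P_scale A B x0 y0 z0 g m n :
  Px A B x0 y0 z0 (m*g) (n*g) = g^2 * Px A B x0 y0 z0 m n /\
  Py A B x0 y0 z0 (m*g) (n*g) = g^2 * Py A B x0 y0 z0 m n /\
  Pz A B x0 y0 z0 (m*g) (n*g) = g^2 * Pz A B x0 y0 z0 m n.
Proof. unfold Px, Py, Pz; repeat split; ring. Qed.

Lemma frac_red (lam r : Z) (X Y Z' PX PY PZ : Z) : lam <> 0 ->
  lam*X = r*PX -> lam*Y = r*PY -> lam*Z' = r*PZ ->
  exists p q, Z.gcd p q = 1 /\ 0 < q /\ q*X = p*PX /\ q*Y = p*PY /\ q*Z' = p*PZ.
Proof.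
  intros Hl E1 E2 E3.
  assert (Hh : Z.gcd r lam <> 0) by (rewrite Z.gcd_eq_0; tauto).
  pose proof (Hd := Z.gcd_div_gcd r lam _ Hh eq_refl).
  destruct (Z.gcd_divide_l r lam) as [p0 Hp]. destruct (Z.gcd_divide_r r lam) as [q0 Hq].
  set (h := Z.gcd r lam) in *.
  assert (Ep : r / h = p0) by (rewrite Hp; apply Z.div_mul; auto).
  assert (Eq : lam / h = q0) by (rewrite Hq; apply Z.div_mul; auto).
  rewrite Ep, Eq in Hd.
  assert (Hq0 : q0 <> 0) by (intro Z0; rewrite Z0 in Hq; simpl in Hq; contradiction).
  assert (F : forall U V, lam*U = r*V -> q0*U = p0*V).
  { intros U V HUV. rewrite Hp, Hq in HUV.
    apply (Z.mul_cancel_l _ _ h Hh). rewrite Z.mul_assoc, (Z.mul_comm h q0), HUV. ring. }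
  destruct (proj1 (Z.lt_gt_cases q0 0) Hq0) as [Hneg|Hpos].
  - exists (-p0), (-q0). rewrite Z.gcd_opp_l, Z.gcd_opp_r. split; [auto|]. split; [lia|].
    apply F in E1; apply F in E2; apply F in E3. repeat split; lia.
  - exists p0, q0. repeat split; auto.
Qed.

Lemma reduce A B x0 y0 z0 x y z c e lam mu : lam <> 0 -> ~(c = 0 /\ e = 0) ->
  lam*x = mu*Px A B x0 y0 z0 c e -> lam*y = mu*Py A B x0 y0 z0 c e ->
  lam*z = mu*Pz A B x0 y0 z0 c e ->
  exists m n p q, Z.gcd m n = 1 /\ Z.gcd p q = 1 /\ 0 < q /\
       represents A B x0 y0 z0 x y z m n p q.
Proof.
  intros Hl Hce E1 E2 E3.
  assert (Hg : Z.gcd c e <> 0) by (rewrite Z.gcd_eq_0; tauto).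
  pose proof (Hd := Z.gcd_div_gcd c e _ Hg eq_refl).
  destruct (Z.gcd_divide_l c e) as [m Hm]. destruct (Z.gcd_divide_r c e) as [n Hn].
  set (g := Z.gcd c e) in *.
  assert (Em : c / g = m) by (rewrite Hm; apply Z.div_mul; auto).
  assert (En : e / g = n) by (rewrite Hn; apply Z.div_mul; auto).
  rewrite Em, En in Hd.
  rewrite Hm, Hn in E1, E2, E3.
  destruct (P_scale A B x0 y0 z0 g m n) as [S1 [S2 S3]].
  rewrite S1 in E1; rewrite S2 in E2; rewrite S3 in E3.
  rewrite Z.mul_assoc in E1, E2, E3.
  destruct (frac_red _ _ _ _ _ _ _ _ Hl E1 E2 E3) as [p [q [H1 [H2 [H3 [H4 H5]]]]]].
  exists m, n, p, q. unfold represents. repeat split; auto.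
Qed.

Lemma nondeg' A B C x0 y0 z0 c e (hA : A <> 0) (hB : B <> 0) (hC : C <> 0) (hz0 : z0 <> 0)
  (hsol0 : A*x0^2 + B*y0^2 + C*z0^2 = 0) : ~(c = 0 /\ e = 0) ->
  Px A B x0 y0 z0 c e = 0 -> Py A B x0 y0 z0 c e = 0 ->
  Pz A B x0 y0 z0 c e = 0 -> False.
Proof.
  intros Hce E1 E2 E3.
  assert (Hg : Z.gcd c e <> 0) by (rewrite Z.gcd_eq_0; tauto).
  pose proof (Hd := Z.gcd_div_gcd c e _ Hg eq_refl).
  destruct (Z.gcd_divide_l c e) as [m Hm]. destruct (Z.gcd_divide_r c e) as [n Hn].
  set (g := Z.gcd c e) in *.
  assert (Em : c / g = m) by (rewrite Hm; apply Z.div_mul; auto).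
  assert (En : e / g = n) by (rewrite Hn; apply Z.div_mul; auto).
  rewrite Em, En in Hd.
  rewrite Hm, Hn in E1, E2, E3.
  destruct (P_scale A B x0 y0 z0 g m n) as [S1 [S2 S3]].
  rewrite S1 in E1; rewrite S2 in E2; rewrite S3 in E3.
  assert (Hg2 : g^2 <> 0) by (apply Z.pow_nonzero; [exact Hg| clear; lia]).
  apply Z.mul_eq_0 in E1; apply Z.mul_eq_0 in E2; apply Z.mul_eq_0 in E3.
  destruct E1 as [E1|E1]; [contradiction|]; destruct E2 as [E2|E2]; [contradiction|];
  destruct E3 as [E3|E3]; [contradiction|].
  exact (nondeg A B C x0 y0 z0 m n hA hB hC hz0 hsol0 Hd E1 E2 E3).
Qed.

Theorem theorem5 (A B C x0 y0 z0 : Z)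
  (hA : A <> 0) (hB : B <> 0) (hC : C <> 0)
  (hsol0 : A*x0^2 + B*y0^2 + C*z0^2 = 0)
  (hnt : ~ (x0 = 0 /\ y0 = 0 /\ z0 = 0)) (hz0 : z0 <> 0) :
  (forall x y z : Z, A*x^2 + B*y^2 + C*z^2 = 0 ->
     exists m n p q : Z, Z.gcd m n = 1 /\ Z.gcd p q = 1 /\ 0 < q /\
       represents A B x0 y0 z0 x y z m n p q)
  /\
  (forall x y z m n p q : Z, Z.gcd m n = 1 -> Z.gcd p q = 1 -> 0 < q ->
     represents A B x0 y0 z0 x y z m n p q ->
     (q | 2 * Z.lcm A B * C * z0^2)).
Proof.
  split.
  - intros x y z Hs.
    destruct (Z.eq_dec (z0*x + x0*z) 0) as [Ha|Ha];
    [destruct (Z.eq_dec (z0*y + y0*z) 0) as [Hb|Hb]|].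
    +
      apply (reduce A B x0 y0 z0 x y z (B*y0) (-(A*x0)) (A*B*C*z0^3) (-z)).
      * assert (z0^3 <> 0) by (apply Z.pow_nonzero; [exact hz0| clear; lia]).
        intro H0; apply Z.mul_eq_0 in H0; destruct H0 as [H0|H0]; [apply Z.mul_eq_0 in H0; destruct H0 as [H0|H0]; [apply Z.mul_eq_0 in H0; destruct H0; contradiction| contradiction] | contradiction].
      * intros [H1 H2].
        apply Z.mul_eq_0 in H1. assert (H3 : A*x0 = 0) by (clear -H2; lia). apply Z.mul_eq_0 in H3.
        destruct H1 as [H1|H1]; [contradiction|]; destruct H3 as [H3|H3]; [contradiction|]. subst.
        assert (H4 : C*z0^2 = 0) by (rewrite <- hsol0; ring).
        apply Z.mul_eq_0 in H4. destruct H4 as [H4|H4]; [contradiction|].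
        apply (Z.pow_eq_0 z0 2) in H4; [contradiction| clear; lia].
      * assert (Id : Px A B x0 y0 z0 (B*y0) (-(A*x0)) = A*B*C*z0^2*x0 - A*B*x0*(A*x0^2 + B*y0^2 + C*z0^2))
          by (unfold Px; ring).
        rewrite hsol0 in Id. rewrite Id.
        replace (A*B*C*z0^3*x) with (A*B*C*z0^2*(z0*x)) by ring.
        replace (z0*x) with (-(x0*z)) by (clear -Ha; lia). ring.
      * assert (Id : Py A B x0 y0 z0 (B*y0) (-(A*x0)) = A*B*C*z0^2*y0 - A*B*y0*(A*x0^2 + B*y0^2 + C*z0^2))
          by (unfold Py; ring).
        rewrite hsol0 in Id. rewrite Id.
        replace (A*B*C*z0^3*y) with (A*B*C*z0^2*(z0*y)) by ring.
        replace (z0*y) with (-(y0*z)) by (clear -Hb; lia). ring.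
      * assert (Id : Pz A B x0 y0 z0 (B*y0) (-(A*x0)) = -(A*B*C*z0^3) + A*B*z0*(A*x0^2 + B*y0^2 + C*z0^2))
          by (unfold Pz; ring).
        rewrite hsol0 in Id. rewrite Id. ring.
    + set (K := A*x0*x + B*y0*y - C*z0*z).
      assert (I1 : Px A B x0 y0 z0 (z0*x + x0*z) (z0*y + y0*z) = 2*z0^2*K*x
        + (2*z0*z*x + x0*z^2)*(A*x0^2 + B*y0^2 + C*z0^2) - x0*z0^2*(A*x^2 + B*y^2 + C*z^2))
        by (unfold Px, K; ring).
      assert (I2 : Py A B x0 y0 z0 (z0*x + x0*z) (z0*y + y0*z) = 2*z0^2*K*y
        + (2*z0*z*y + y0*z^2)*(A*x0^2 + B*y0^2 + C*z0^2) - y0*z0^2*(A*x^2 + B*y^2 + C*z^2))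
        by (unfold Py, K; ring).
      assert (I3 : Pz A B x0 y0 z0 (z0*x + x0*z) (z0*y + y0*z) = 2*z0^2*K*z
        + z0*z^2*(A*x0^2 + B*y0^2 + C*z0^2) + z0^3*(A*x^2 + B*y^2 + C*z^2))
        by (unfold Pz, K; ring).
      rewrite hsol0, Hs in I1, I2, I3.
      assert (HK : 2*z0^2*K <> 0).
      { intro HK0.
        apply (nondeg' A B C x0 y0 z0 (z0*x + x0*z) (z0*y + y0*z)); auto; try tauto.
        - rewrite I1, HK0; ring.
        - rewrite I2, HK0; ring.
        - rewrite I3, HK0; ring. }
      apply (reduce A B x0 y0 z0 x y z (z0*x + x0*z) (z0*y + y0*z) (2*z0^2*K) 1); auto; try tauto.
      * rewrite I1; ring.
      * rewrite I2; ring.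
      * rewrite I3; ring.
    + set (K := A*x0*x + B*y0*y - C*z0*z).
      assert (I1 : Px A B x0 y0 z0 (z0*x + x0*z) (z0*y + y0*z) = 2*z0^2*K*x
        + (2*z0*z*x + x0*z^2)*(A*x0^2 + B*y0^2 + C*z0^2) - x0*z0^2*(A*x^2 + B*y^2 + C*z^2))
        by (unfold Px, K; ring).
      assert (I2 : Py A B x0 y0 z0 (z0*x + x0*z) (z0*y + y0*z) = 2*z0^2*K*y
        + (2*z0*z*y + y0*z^2)*(A*x0^2 + B*y0^2 + C*z0^2) - y0*z0^2*(A*x^2 + B*y^2 + C*z^2))
        by (unfold Py, K; ring).
      assert (I3 : Pz A B x0 y0 z0 (z0*x + x0*z) (z0*y + y0*z) = 2*z0^2*K*z
        + z0*z^2*(A*x0^2 + B*y0^2 + C*z0^2) + z0^3*(A*x^2 + B*y^2 + C*z^2))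
        by (unfold Pz, K; ring).
      rewrite hsol0, Hs in I1, I2, I3.
      assert (HK : 2*z0^2*K <> 0).
      { intro HK0.
        apply (nondeg' A B C x0 y0 z0 (z0*x + x0*z) (z0*y + y0*z)); auto; try tauto.
        - rewrite I1, HK0; ring.
        - rewrite I2, HK0; ring.
        - rewrite I3, HK0; ring. }
      apply (reduce A B x0 y0 z0 x y z (z0*x + x0*z) (z0*y + y0*z) (2*z0^2*K) 1); auto; try tauto.
      * rewrite I1; ring.
      * rewrite I2; ring.
      * rewrite I3; ring.
  - intros x y z m n p q Hmn Hpq Hq [E1 [E2 E3]].
    assert (Hqp : Z.gcd q p = 1) by (rewrite Z.gcd_comm; auto).
    assert (Dx : (q | Px A B x0 y0 z0 m n)).
    { apply (Z.gauss q p); auto. rewrite <- E1. exists x; ring. }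
    assert (Dy : (q | Py A B x0 y0 z0 m n)).
    { apply (Z.gauss q p); auto. rewrite <- E2. exists y; ring. }
    assert (Dz : (q | Pz A B x0 y0 z0 m n)).
    { apply (Z.gauss q p); auto. rewrite <- E3. exists z; ring. }
    destruct Dx as [kx Hx]. destruct Dy as [ky Hy]. destruct Dz as [kz Hz].
    assert (Jm : 2*A*C*z0^2*m^2 = (-A*x0*kx + B*y0*ky + C*z0*kz)*q).
    { transitivity (-A*x0*Px A B x0 y0 z0 m n + B*y0*Py A B x0 y0 z0 m n + C*z0*Pz A B x0 y0 z0 m n
         - (B*n^2 - A*m^2)*(A*x0^2 + B*y0^2 + C*z0^2)).
      - unfold Px, Py, Pz; ring.
      - rewrite hsol0, Hx, Hy, Hz; ring. }
    assert (Jn : 2*B*C*z0^2*n^2 = (A*x0*kx - B*y0*ky + C*z0*kz)*q).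
    { transitivity (A*x0*Px A B x0 y0 z0 m n - B*y0*Py A B x0 y0 z0 m n + C*z0*Pz A B x0 y0 z0 m n
         + (B*n^2 - A*m^2)*(A*x0^2 + B*y0^2 + C*z0^2)).
      - unfold Px, Py, Pz; ring.
      - rewrite hsol0, Hx, Hy, Hz; ring. }
    destruct (Z.divide_lcm_l A B) as [sa Hsa].
    destruct (Z.divide_lcm_r A B) as [sb Hsb].
    set (N := 2 * Z.lcm A B * C * z0^2).
    assert (Wm : N*m^2 = (sa*(-A*x0*kx + B*y0*ky + C*z0*kz))*q).
    { unfold N. rewrite Hsa. transitivity (sa*(2*A*C*z0^2*m^2)); [ring| rewrite Jm; ring]. }
    assert (Wn : N*n^2 = (sb*(A*x0*kx - B*y0*ky + C*z0*kz))*q).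
    { unfold N. rewrite Hsb. transitivity (sb*(2*B*C*z0^2*n^2)); [ring| rewrite Jn; ring]. }
    destruct (Z.gcd_bezout m n 1 Hmn) as [u [v Huv]].
    set (wm := sa*(-A*x0*kx + B*y0*ky + C*z0*kz)) in *.
    set (wn := sb*(A*x0*kx - B*y0*ky + C*z0*kz)) in *.
    exists (wm*(u^3*m + 3*u^2*v*n) + wn*(3*u*v^2*m + v^3*n)).
    transitivity (N*(u*m+v*n)^3).
    + rewrite Huv; ring.
    + transitivity (N*m^2*(u^3*m + 3*u^2*v*n) + N*n^2*(3*u*v^2*m + v^3*n)).
      * ring.
      * rewrite Wm, Wn; ring.
Qed.
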